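(* Let $b\ge2$ and $N\ge2$ be integers with $N$ even, let $c_j$ ($j\in\mathbb{Z}$) be given reals, let $\beta\ge0$ be an integer, and let $j\ge0$ be an index and $\Delta$ a real number. Run the following procedure (the update of an \textsc{Ola} buffer): start with a map $deltas$ (default value $0$) containing the single key $j$ with $deltas_j=\Delta$. For $s=0,1,\ldots,\beta$: let $K$ be the set of keys of $deltas$ at the start of this iteration; for each $i\in K$ such that $\lfloor i/b^s\rfloor$ is not divisible by $b$, set $\delta=deltas_i$, then for each $m=-\frac N2+1,\ldots,\frac N2$ add $c_{-bm+(\lfloor i/b^s\rfloor \bmod b)}\,\delta$ to $deltas_{(\lfloor i/b^{s+1}\rfloor+m)b^{s+1}}$, then (after possibly adding $deltas_i$ to the buffer entry $B_{i/b}$ when $b\mid i$) remove key $i$ from $deltas$. Then at the start and at the end of every iteration $s$, the map $deltas$ has at most $2N$ keys; that is, the changes are propagated from each scale to the next over at most $2N$ cells (the update dag has at most $2N$ nodes at each level).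
   Context: The \textsc{Ola} buffer is a hierarchical overlapped bin buffer over an external array, with bin size $b$, $N$ buffered moments and Lagrange coefficients $c_j$ of degree $N-1$; cells whose index is divisible by $b^{s-1}$ are said to belong to scale $s$ (scale $0$ being the external array), and higher-scale values are stored in place. The procedure above propagates the effect of changing the external-array entry $a_j$ by $\Delta$ through the scales. *)

(* Defs.v *)
From HB Require Import structures.
From mathcomp Require Import all_boot all_order all_algebra.
From mathcomp Require Import finmap.
From mathcomp Require Import reals.
Set Implicit Arguments. Unset Strict Implicit. Unset Printing Implicit Defensive.
Import Order.TTheory GRing.Theory Num.Theory.
Local Open Scope fset_scope.
Local Open Scope fmap_scope.
Local Open Scope ring_scope.

Definition deltas_map (R : realType) := {fmap int -> R}.

Definition dget (R : realType) (d : deltas_map R) (k : int) : R :=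
  odflt 0 d.[? k].

Definition dadd (R : realType) (d : deltas_map R) (k : int) (v : R)
  : deltas_map R := d.[k <- dget d k + v].

Definition offsets (N : nat) : seq int :=
  [seq (k%:Z - (N./2)%:Z + 1) | k <- iota 0 N].

(* processing of one key i during iteration s (floor division / mod are
   the Euclidean ones of intdiv, i.e. floor for positive divisors) *)
Definition process_key (R : realType) (b N : nat) (c : int -> R) (s : nat)
    (d : deltas_map R) (i : int) : deltas_map R :=
  let q := (i %/ (b ^ s)%:Z)%Z in
  if ~~ (b%:Z %| q)%Z then
    let delta := dget d i in
    let d' := foldl (fun d m =>
                 dadd d (((i %/ (b ^ s.+1)%:Z)%Z + m) * (b ^ s.+1)%:Z)
                      (c (- (b%:Z * m) + (q %% b%:Z)%Z) * delta))
               d (offsets N) in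
    (* (the buffer update B_{i/b} += deltas_i is a side effect on the
        buffer, irrelevant for deltas) *)
    d'.[~ i]
  else d.

Definition ola_iter (R : realType) (b N : nat) (c : int -> R) (s : nat)
    (d : deltas_map R) : deltas_map R :=
  foldl (process_key b N c s) d (enum_fset (domf d)).

Definition ola_init (R : realType) (j : int) (Delta : R) : deltas_map R :=
  [fmap].[j <- Delta].

(* state of deltas at the start of iteration s (i.e. after iterations
   0, ..., s-1) *)
Definition ola_state (R : realType) (b N : nat) (c : int -> R) (j : int)
    (Delta : R) (s : nat) : deltas_map R :=
  foldl (fun d t => ola_iter b N c t d) (ola_init j Delta) (iota 0 s).

(* Main.v *)
Require Import Defs.
From HB Require Import structures.
From mathcomp Require Import all_boot all_order all_algebra.
From mathcomp Require Import finmap.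
From mathcomp Require Import reals.
From mathcomp Require Import zify lra.
Import Order.TTheory GRing.Theory Num.Theory.
Local Open Scope fset_scope.
Local Open Scope ring_scope.

Lemma div_window (b : int) (h L x : int) : 2 <= b -> 1 <= h ->
  L <= x < L + 4 * h -> (L %/ b)%Z <= (x %/ b)%Z <= (L %/ b)%Z + 2 * h.
Proof.
move=> hb hh /andP[h1 h2].
have b0 : b != 0 by lia.
have eL := divz_eq L b; have ex := divz_eq x b.
have mL0 := modz_ge0 L b0; have mx0 := modz_ge0 x b0.
have mL1 := ltz_mod L b0; have mx1 := ltz_mod x b0.
have ab : `|b| = b by apply: gtr0_norm; lia.
rewrite ab in mL1 mx1.
move: eL ex mL0 mx0 mL1 mx1.
set qL := (L %/ b)%Z; set qx := (x %/ b)%Z; set rL := (L %% b)%Z; set rx := (x %% b)%Z.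
move=> eL ex *.
apply/andP; split; nia.
Qed.

Definition Sk (b : nat) (h : nat) (s : nat) (L k : int) :=
  exists2 x : int, k = x * (b ^ s)%:Z & L <= x < L + (4 * h)%:Z.

Lemma fold_dom (R : realType) (F : int -> int) (G : int -> R) (ms : seq int)
  (d : deltas_map R) k :
  k \in domf (foldl (fun d m => dadd d (F m) (G m)) d ms) ->
  k \in domf d \/ exists2 m, m \in ms & k = F m.
Proof.
elim: ms d => [|m ms IH] d /=; first by left.
move=> /IH [|[m' Hm' ->]]; last by right; exists m' => //; rewrite inE Hm' orbT.
rewrite /dadd dom_setf in_fset1U => /orP[/eqP ->|]; last by left.
by right; exists m => //; rewrite inE eqxx.
Qed.

Lemma card_S (R : realType) (b : nat) (h : nat) s L (d : deltas_map R) :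
  (forall k, k \in domf d -> Sk b h s L k) -> (#|` domf d| <= 4 * h)%N.
Proof.
move=> HS.
set T := [fset x in map (fun n : nat => (L + n%:Z) * (b ^ s)%:Z) (iota 0 (4 * h))].
have sub : domf d `<=` T.
  apply/fsubsetP => k /HS [x -> /andP[h1 h2]].
  rewrite /T in_fset /=; apply/mapP; exists `|x - L|%N.
    rewrite mem_iota /=; lia.
  congr (_ * _); lia.
apply: (leq_trans (fsubset_leq_card sub)).
rewrite card_fseq; apply: (leq_trans (size_undup _)).
by rewrite size_map size_iota.
Qed.

Section Main.
Variables (R : realType) (b N : nat) (c : int -> R).
Hypotheses (hb : (2 <= b)%N) (hN : (2 <= N)%N) (hev : ~~ odd N).
Let h := N./2.
Lemma hN2 : N = (2 * h)%N.
Proof. rewrite /h -{1}(odd_double_half N) (negbTE hev) add0n; lia. Qed.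

Lemma pos_pow s : (0 < (b ^ s)%:Z).
Proof. rewrite ltz_nat expn_gt0; apply/orP; left; lia. Qed.

Lemma powS s : (b ^ s.+1)%:Z = (b ^ s)%:Z * b%:Z.
Proof. by rewrite expnSr PoszM. Qed.

Lemma div_pow s x : ((x * (b ^ s)%:Z) %/ (b ^ s)%:Z)%Z = x.
Proof. apply: mulzK; have := pos_pow s; lia. Qed.

Lemma div_powS s x : ((x * (b ^ s)%:Z) %/ (b ^ s.+1)%:Z)%Z = (x %/ b%:Z)%Z.
Proof. by rewrite powS [(b ^ s)%:Z * _]mulrC divzMpr ?pos_pow. Qed.

Let L' (L : int) := ((L %/ b%:Z)%Z - h%:Z + 1).

Lemma stepA s L i : Sk b h s L i -> (b%:Z %| (i %/ (b ^ s)%:Z))%Z ->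
  Sk b h s.+1 (L' L) i.
Proof.
move=> [x -> Hx]; rewrite div_pow => dv.
have hh : (1 <= h)%N by rewrite /h; have := hN2; lia.
have W := div_window (b%:Z) (h%:Z) L x.
have : (L %/ b%:Z)%Z <= (x %/ b%:Z)%Z <= (L %/ b%:Z)%Z + 2 * h%:Z.
  apply: W; [lia|lia|move: Hx; rewrite PoszM; lia].
move=> HW.
exists (x %/ b%:Z)%Z; last by rewrite /L'; rewrite PoszM; lia.
by rewrite powS [(b ^ s)%:Z * _]mulrC mulrA divzK.
Qed.

Lemma stepB s L i m : Sk b h s L i -> m \in offsets N ->
  Sk b h s.+1 (L' L) (((i %/ (b ^ s.+1)%:Z)%Z + m) * (b ^ s.+1)%:Z).
Proof.
move=> [x -> Hx] /mapP [k]; rewrite mem_iota add0n => Hk ->.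
rewrite div_powS.
have hh : (1 <= h)%N by rewrite /h; have := hN2; lia.
have W := div_window (b%:Z) (h%:Z) L x.
have : (L %/ b%:Z)%Z <= (x %/ b%:Z)%Z <= (L %/ b%:Z)%Z + 2 * h%:Z.
  apply: W; [lia|lia|move: Hx; rewrite PoszM; lia].
move=> HW.
have HN := hN2; rewrite -/h in HN.
exists ((x %/ b%:Z)%Z + (k%:Z - h%:Z + 1)) => //.
rewrite /L' PoszM; lia.
Qed.

Lemma fold_inv s L (r : seq int) (d : deltas_map R) :
  (forall k, k \in r -> Sk b h s L k) ->
  (forall k, k \in domf d -> Sk b h s.+1 (L' L) k \/ k \in r) ->
  forall k, k \in domf (foldl (process_key b N c s) d r) -> Sk b h s.+1 (L' L) k.
Proof.
elim: r d => [|i r IH] d Hr Hd /=.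
  by move=> k /Hd [//|].
have Si : Sk b h s L i by apply: Hr; rewrite inE eqxx.
apply: IH; first by move=> k kr; apply: Hr; rewrite inE kr orbT.
move=> k.
rewrite /process_key /=.
case: ifP => Hp.
  rewrite domf_rem in_fsetD1 => /andP[ki /fold_dom [/Hd|[m Hm ->]]].
  - case=> [|]; first by left.
    by rewrite inE (negbTE ki) /=; right.
  - by left; apply: stepB.
move=> /Hd [|]; first by left.
rewrite inE => /orP[/eqP ->|]; last by right.
left; apply: stepA => //; by move/negbFE: Hp.
Qed.

Lemma iter_inv s L (d : deltas_map R) :
  (forall k, k \in domf d -> Sk b h s L k) ->
  forall k, k \in domf (ola_iter b N c s d) -> Sk b h s.+1 (L' L) k.
Proof.
move=> Hd; apply: fold_inv => k kd; last by right.
by apply: Hd.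
Qed.

Lemma state_inv (j : int) (D : R) s :
  exists L, forall k, k \in domf (ola_state b N c j D s) -> Sk b h s L k.
Proof.
elim: s => [|s [L IH]].
  exists j => k; rewrite /ola_state /= /ola_init in_fset1U => /orP[/eqP ->|//].
  exists j; first by rewrite expn0 mulr1.
  have := hN2; rewrite -/h => ?; apply/andP; split; lia.
exists (L' L) => k.
rewrite /ola_state -addn1 iotaD foldl_cat /= -/(ola_state b N c j D s).
by rewrite add0n addn1; apply: iter_inv.
Qed.

End Main.

Theorem proposition5 (R : realType) (b N : nat) (c : int -> R) (beta : nat)
    (j : nat) (Delta : R) :
  (2 <= b)%N -> (2 <= N)%N -> ~~ odd N ->
  forall s : nat, (s <= beta)%N ->
    (#|` domf (ola_state b N c j%:Z Delta s)| <= 2 * N)%N /\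
    (#|` domf (ola_iter b N c s (ola_state b N c j%:Z Delta s))| <= 2 * N)%N.
Proof.
move=> hb hN hev s _.
have E := @hN2 b N hb hN hev.
have [L HL] := @state_inv R b N c hb hN hev j%:Z Delta s.
have -> : (2 * N = 4 * N./2)%N by lia.
split; first exact: card_S HL.
exact: card_S (@iter_inv R b N c hb hN hev _ _ _ HL).
Qed.
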